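(* Let $d,l,m\geq1$ and let $\mathcal{Q}=\{P_1,\dots,P_l\}$ be a measurement scheme of POVMs on $\mathbb{C}^d$ with outcome set $\{1,\dots,m\}$. Then $\mathcal{Q}$ determines any pure state among all states if and only if every non-zero element of $\ker M_{\mathcal{Q}}$ has at least two (counted with multiplicity) positive eigenvalues.
   Context: $H(d)$ is the real vector space of $d\times d$ complex Hermitian matrices. A POVM with outcome set $\{1,\dots,m\}$ is a map $j\mapsto P(j)\in H(d)$ with $P(j)\geq0$ and $\sum_j P(j)=\mathbb{1}$. The scheme induces the real-linear map $M_{\mathcal{Q}}:H(d)\to M_{lm}(\mathbb{R})$, $M_{\mathcal{Q}}(X)_{i,j}=\mathrm{tr}(XP_i(j))$. A state is a positive semidefinite trace-one matrix; a pure state is a rank-one state. $\mathcal{Q}$ determines any pure state among all states if for every pure state $\sigma$ and every state $\varrho$, $M_{\mathcal{Q}}(\sigma)=M_{\mathcal{Q}}(\varrho)$ implies $\varrho=\sigma$. *)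

(* Defs.v *)
From HB Require Import structures.
From mathcomp Require Import all_boot all_order all_algebra.
From mathcomp Require Import reals.
From mathcomp.real_closed Require Import complex.
Set Implicit Arguments. Unset Strict Implicit. Unset Printing Implicit Defensive.
Import Order.TTheory GRing.Theory Num.Theory.
Local Open Scope ring_scope.

Section Defs.
Variable (R : realType).
Local Notation C := R[i].

Definition adjmx (p q : nat) (A : 'M[C]_(p, q)) : 'M[C]_(q, p) :=
  map_mx Num.conj (A^T).

Definition hermitian (d : nat) (A : 'M[C]_d) : Prop := adjmx A = A.

Definition psd (d : nat) (A : 'M[C]_d) : Prop :=
  hermitian A /\ forall v : 'cV[C]_d, 0 <= (adjmx v *m A *m v) 0 0.

Definition state (d : nat) (A : 'M[C]_d) : Prop := psd A /\ \tr A = 1.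

Definition pure_state (d : nat) (A : 'M[C]_d) : Prop :=
  state A /\ \rank A = 1%N.

Definition povm (d m : nat) (P : 'I_m -> 'M[C]_d) : Prop :=
  (forall j, psd (P j)) /\ \sum_(j < m) P j = 1%:M.

Definition scheme (d l m : nat) (Q : 'I_l -> 'I_m -> 'M[C]_d) : Prop :=
  forall i, povm (Q i).

Definition MQ (d l m : nat) (Q : 'I_l -> 'I_m -> 'M[C]_d) (X : 'M[C]_d)
  : 'M[C]_(l, m) := \matrix_(i < l, j < m) \tr (X *m Q i j).

Definition determines_pure (d l m : nat) (Q : 'I_l -> 'I_m -> 'M[C]_d) : Prop :=
  forall sigma rho : 'M[C]_d, pure_state sigma -> state rho ->
    MQ Q sigma = MQ Q rho -> rho = sigma.

(* The kernel of M_Q as a real-linear map on H(d) *)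
Definition in_ker_MQ (d l m : nat) (Q : 'I_l -> 'I_m -> 'M[C]_d) (X : 'M[C]_d)
  : Prop := hermitian X /\ MQ Q X = 0.

(* X has at least k positive eigenvalues counted with multiplicity:
   the eigenvalues with multiplicity are the roots (with multiplicity) of the
   characteristic polynomial, listed as a sequence s. *)
Definition at_least_pos_eigs (d : nat) (k : nat) (X : 'M[C]_d) : Prop :=
  exists s : seq C, char_poly X = \prod_(a <- s) ('X - a%:P) /\
                    (k <= count (fun a : C => (0 < a)%R) s)%N.
End Defs.

(* Main.v *)
Require Import Defs.
From HB Require Import structures.
From mathcomp Require Import all_boot all_order all_algebra.
From mathcomp Require Import reals.
From mathcomp.real_closed Require Import complex.
From mathcomp Require Import sesquilinear spectral.
Import Order.TTheory GRing.Theory Num.Theory.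
Local Open Scope ring_scope.
Set Implicit Arguments. Unset Strict Implicit. Unset Printing Implicit Defensive.

Section Helpers.
Variable R : realType.
Local Notation C := R[i].
Local Open Scope sesquilinear_scope.

Lemma adjE p q (A : 'M[C]_(p,q)) : adjmx A = A ^t*. Proof. by []. Qed.

Lemma adjmx_mul p q r (A : 'M[C]_(p,q)) (B : 'M[C]_(q,r)) :
  adjmx (A *m B) = adjmx B *m adjmx A.
Proof. by rewrite /adjmx trmx_mul map_mxM. Qed.

Lemma adjmxK p q (A : 'M[C]_(p,q)) : adjmx (adjmx A) = A.
Proof. exact: trmxCK. Qed.

Lemma hermitianE n (X : 'M[C]_n) : Defs.hermitian X <-> X \is hermsymmx.
Proof.
rewrite /Defs.hermitian; split => [H|/is_hermitianmxP H].
  by apply/is_hermitianmxP; rewrite expr0 scale1r -adjE H.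
by rewrite adjE {2}H expr0 scale1r.
Qed.

Lemma unitary_tK n (P : 'M[C]_n) : P \is unitarymx -> P ^t* *m P = 1%:M.
Proof. by move=> /unitarymxP /mulmx1C. Qed.

Lemma spectral_herm n (X : 'M[C]_n) : Defs.hermitian X ->
  exists P : 'M[C]_n, exists D : 'rV[C]_n,
    [/\ P \is unitarymx, (forall i, D 0 i \is Num.real) &
        X = P ^t* *m diag_mx D *m P].
Proof.
move=> /hermitianE H; exists (spectralmx X), (spectral_diag X); split.
- exact: spectral_unitarymx.
- by move=> i; apply: (mxOverP (hermitian_spectral_diag_real H)).
- have := hermitian_normalmx H => /orthomx_spectralP {1}->.
  by rewrite invmx_unitary ?spectral_unitarymx.
Qed.

Lemma char_poly_conj n (A P : 'M[C]_n) : P \in unitmx ->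
  char_poly (invmx P *m A *m P) = char_poly A.
Proof.
move=> Pu; rewrite /char_poly /char_poly_mx.
have -> : 'X%:M - map_mx polyC (invmx P *m A *m P) =
  map_mx polyC (invmx P) *m ('X%:M - map_mx polyC A) *m map_mx polyC P.
  rewrite mulmxBr mulmxBl !map_mxM -!mulmxA; congr (_ - _).
  by rewrite mul_scalar_mx -scalemxAr -map_mxM mulVmx // map_mx1 scalemx1.
rewrite !det_mulmx mulrC mulrA -det_mulmx -map_mxM mulmxV // map_mx1 det1.
by rewrite mul1r.
Qed.

Lemma quad_diag n (D : 'rV[C]_n) (y : 'cV[C]_n) :
  (adjmx y *m diag_mx D *m y) 0 0 = \sum_i D 0 i * `|y i 0| ^+ 2.
Proof.
rewrite mul_mx_diag mxE; apply: eq_bigr => i _.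
by rewrite !mxE normCKC mulrCA mulrA.
Qed.

Lemma quad_conj n (P : 'M[C]_n) (M : 'M[C]_n) (v : 'cV[C]_n) :
  (adjmx v *m (P ^t* *m M *m P) *m v) =
  (adjmx (P *m v) *m M *m (P *m v)).
Proof. by rewrite adjmx_mul !mulmxA. Qed.

Lemma tr_conj n (P M : 'M[C]_n) : P \is unitarymx ->
  \tr (P ^t* *m M *m P) = \tr M.
Proof. by move=> Pu; rewrite mxtrace_mulC mulmxA (unitarymxP Pu) mul1mx. Qed.

Lemma rank_conj n (P M : 'M[C]_n) : P \is unitarymx ->
  \rank (P ^t* *m M *m P) = \rank M.
Proof.
move=> Pu; rewrite mxrankMfree ?row_free_unit ?unitarymx_unit //.
rewrite -mxrank_tr trmx_mul mxrankMfree ?mxrank_tr // row_free_unit unitmx_tr.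
by rewrite unitarymx_unit // trmxC_unitary.
Qed.

Lemma herm_conj n (P : 'M[C]_n) (D : 'rV[C]_n) :
  (forall i, D 0 i \is Num.real) -> Defs.hermitian (P ^t* *m diag_mx D *m P).
Proof.
move=> Dr; rewrite /Defs.hermitian !adjmx_mul adjmxK -mulmxA.
rewrite -adjE; congr (_ *m (_ *m _)).
apply/matrixP => i j; rewrite !mxE.
case: (eqVneq i j) => [->|ne]; first by rewrite !mulr1n conj_Creal.
have nji : (j == i) = false by rewrite eq_sym; apply/negbTE.
by rewrite !mulr0n conjC0.
Qed.

Lemma count_card n (f : 'I_n -> C) (a : pred C) :
  count a [seq f i | i <- index_enum 'I_n] = #|[pred i | a (f i)]|.
Proof. by rewrite count_map -sum1_count -sum1_card. Qed.

Lemma eigs_conj n (P : 'M[C]_n) (D : 'rV[C]_n) (X : 'M[C]_n) :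
  P \is unitarymx -> X = P ^t* *m diag_mx D *m P ->
  (at_least_pos_eigs 2 X <-> (1 < #|[pred i | (0 < D 0%R i)%R]|)%N).
Proof.
move=> Pu ->.
have cp : char_poly (P ^t* *m diag_mx D *m P) =
    \prod_(a <- [seq D 0 i | i <- index_enum 'I_n]) ('X - a%:P).
  rewrite -invmx_unitary // char_poly_conj ?unitarymx_unit //.
  rewrite char_poly_trig ?diag_mx_is_trig // big_map.
  by apply: eq_bigr => i _; rewrite mxE eqxx mulr1n.
rewrite -(count_card (D 0) (fun a => 0 < a)); split.
  move=> [s [hs hc]]; move: hc; rewrite cp in hs.
  by move/prod_XsubC_eq/permP: hs => ->.
by move=> h; exists [seq D 0 i | i <- index_enum 'I_n]; split.
Qed.

Lemma MQB d l m (Q : 'I_l -> 'I_m -> 'M[C]_d) (A B : 'M[C]_d) :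
  MQ Q (A - B) = MQ Q A - MQ Q B.
Proof. by apply/matrixP => i j; rewrite !mxE mulmxBl linearB. Qed.

Lemma MQZ d l m (Q : 'I_l -> 'I_m -> 'M[C]_d) (a : C) (A : 'M[C]_d) :
  MQ Q (a *: A) = a *: MQ Q A.
Proof. by apply/matrixP => i j; rewrite !mxE -scalemxAl mxtraceZ. Qed.

Lemma tr_ker d l m (Q : 'I_l -> 'I_m -> 'M[C]_d) (X : 'M[C]_d) :
  (0 < l)%N -> scheme Q -> MQ Q X = 0 -> \tr X = 0.
Proof.
move=> hl hQ hX; pose i0 := Ordinal hl.
have [_ hs] := hQ i0.
rewrite -[X]mulmx1 -hs mulmx_sumr raddf_sum /=.
apply: big1 => j _.
by have /matrixP/(_ i0 j) := hX; rewrite !mxE.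
Qed.

Lemma psd_conj n (P : 'M[C]_n) (D : 'rV[C]_n) :
  (forall i, 0 <= D 0 i) -> psd (P ^t* *m diag_mx D *m P).
Proof.
move=> Dp; split.
  by apply: herm_conj => i; apply: ger0_real.
move=> v; rewrite quad_conj quad_diag; apply: sumr_ge0 => i _.
by apply: mulr_ge0 => //; apply: exprn_ge0.
Qed.

Lemma exists_y d (S : 'M[C]_d) (k1 k2 : 'I_d) : (\rank S <= 1)%N ->
  exists z0 z1 : C, (z0 != 0 \/ z1 != 0) /\
    S *m (\col_i ((i == k1)%:R * z0 + (i == k2)%:R * z1)) = 0.
Proof.
move=> rS.
pose M : 'M[C]_(d,2) := \matrix_(i, j) (i == (if val j == 0%N then k1 else k2))%:R.
pose B := S *m M.
have rB : (\rank B <= 1)%N by apply: leq_trans (mxrankM_maxl _ _) _.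
pose K := kermx B^T.
have rK : (0 < \rank K)%N.
  by rewrite mxrank_ker mxrank_tr subn_gt0; apply: leq_ltn_trans rB _.
have [r hr] : exists r, row r K != 0.
  case: (pickP (fun r => row r K != 0)) => [r hr|h]; first by exists r.
  move: rK; suff -> : K = 0 by rewrite mxrank0.
  by apply/row_matrixP => r; rewrite row0; apply/eqP; move/negbFE: (h r).
pose z := (row r K)^T.
have Bz : B *m z = 0.
  rewrite /z -[B]trmxK -trmx_mul (sub_kermxP (row_sub r K)) trmx0 //.
exists (z 0 0), (z 1 0); split.
  case: (eqVneq (z 0 0) 0) => h0; [right | by left].
  apply/eqP => h1; move: hr; rewrite -trmx_eq0 -/z => /eqP; apply.
  apply/matrixP => i j; rewrite ord1 [RHS]mxE.
  case: i => [[|[|i]] hi] //.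
  - by have -> : Ordinal hi = 0 by apply: val_inj.
  - by have -> : Ordinal hi = 1 by apply: val_inj.
have colE : forall w : 'cV[C]_2,
    \col_i ((i == k1)%:R * w 0 0 + (i == k2)%:R * w 1 0) = M *m w.
  move=> w; apply/matrixP => i j; rewrite ord1 !mxE big_ord_recl big_ord_recl big_ord0.
  rewrite !mxE /= addr0.
  by congr (_ * w _ 0 + _ * w _ 0); apply: val_inj.
by rewrite colE mulmxA.
Qed.

Lemma herm_sub n (A B : 'M[C]_n) : Defs.hermitian A -> Defs.hermitian B ->
  Defs.hermitian (A - B).
Proof.
rewrite /Defs.hermitian /adjmx => hA hB.
by rewrite linearB /= map_mxB hA hB.
Qed.

Lemma dirB d l m (Q : 'I_l -> 'I_m -> 'M[C]_d) :
  (forall X : 'M[C]_d, in_ker_MQ Q X -> X != 0 -> at_least_pos_eigs 2 X) ->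
  determines_pure Q.
Proof.
move=> hker sig rho [[[hsh hsq] _] hrk] [[hrh hrq] _] hM.
case: (eqVneq rho sig) => // neq; exfalso.
pose X := sig - rho.
have hX : Defs.hermitian X by apply: herm_sub.
have hMX : MQ Q X = 0 by rewrite /X MQB hM subrr.
have X0 : X != 0 by rewrite /X subr_eq0 eq_sym.
have [P [D [Pu Dr XE]]] := spectral_herm hX.
have /(eigs_conj Pu XE) /card_gt1P [k1 [k2 [hk1 hk2 nek]]] :=
  hker X (conj hX hMX) X0.
rewrite !inE /= in hk1 hk2.
have rS : (\rank (sig *m P ^t*) <= 1)%N by rewrite -hrk mxrankM_maxl.
have [z0 [z1 [hz hSy]]] := exists_y k1 k2 rS.
pose y : 'cV[C]_d := \col_i ((i == k1)%:R * z0 + (i == k2)%:R * z1).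
pose w := P ^t* *m y.
have Pw : P *m w = y by rewrite /w mulmxA (unitarymxP Pu) mul1mx.
have q1 : (adjmx w *m X *m w) 0 0 =
    (adjmx w *m sig *m w) 0 0 - (adjmx w *m rho *m w) 0 0.
  by rewrite /X mulmxBr mulmxBl !mxE.
have q2 : (adjmx w *m sig *m w) 0 0 = 0.
  have sw : sig *m w = 0 by rewrite /w mulmxA hSy.
  by rewrite -mulmxA sw mulmx0 mxE.
have q3 : (adjmx w *m X *m w) 0 0 <= 0.
  by rewrite q1 q2 sub0r oppr_le0.
have yk1 : y k1 0 = z0 by rewrite mxE eqxx (negbTE nek) mulr1n mulr0n mul1r mul0r addr0.
have yk2 : y k2 0 = z1.
  by rewrite mxE eqxx eq_sym (negbTE nek) mulr1n mulr0n mul1r mul0r add0r.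
have ge0 : forall i, 0 <= D 0 i * `|y i 0| ^+ 2.
  move=> i; case: (eqVneq i k1) => [->|n1]; first by apply: mulr_ge0; [apply: ltW | apply: exprn_ge0].
  case: (eqVneq i k2) => [->|n2]; first by apply: mulr_ge0; [apply: ltW | apply: exprn_ge0].
  by rewrite mxE (negbTE n1) (negbTE n2) !mulr0n !mul0r addr0 normr0 expr0n mulr0.
have : 0 < (adjmx w *m X *m w) 0 0.
  rewrite XE quad_conj Pw quad_diag.
  have [k [hk hyk]] : exists k, 0 < D 0 k /\ y k 0 != 0.
    by case: hz => h; [exists k1; rewrite yk1 | exists k2; rewrite yk2].
  rewrite (bigD1 k) //=; apply: (@lt_le_trans _ _ (D 0 k * `|y k 0| ^+ 2)).
    by rewrite mulr_gt0 // exprn_gt0 // normr_gt0.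
  by rewrite lerDl sumr_ge0.
by move=> h; have := lt_le_trans h q3; rewrite ltxx.
Qed.

Lemma conj_lin n (P : 'M[C]_n) (a : C) (A B : 'M[C]_n) :
  P ^t* *m (a *: (A - B)) *m P = a *: (P ^t* *m A *m P - P ^t* *m B *m P).
Proof. by rewrite -scalemxAr -scalemxAl mulmxBr mulmxBl. Qed.

Lemma dirA d l m (Q : 'I_l -> 'I_m -> 'M[C]_d) : (0 < l)%N -> scheme Q ->
  determines_pure Q ->
  (forall X : 'M[C]_d, in_ker_MQ Q X -> X != 0 -> at_least_pos_eigs 2 X).
Proof.
move=> hl hQ hdet X [hX hMX] X0.
have [P [D [Pu Dr XE]]] := spectral_herm hX.
apply/(eigs_conj Pu XE).
have trX := tr_ker hl hQ hMX.
have sumD : \sum_i D 0 i = 0 by rewrite -mxtrace_diag -(tr_conj _ Pu) -XE.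
rewrite ltnNge; apply/negP => hle.
have Dle : forall i, ~~ (0 < D 0 i) -> D 0 i <= 0.
  by move=> i; rewrite real_leNgt ?real0 ?Dr.
case: (pickP [pred i | (0 < D 0%R i)%R]) => [k kpos | none]; last first.
  have D0 : forall i, D 0 i = 0.
    move=> i; apply/eqP; rewrite -oppr_eq0; apply/eqP.
    apply: (@psumr_eq0P _ _ predT (fun i => - D 0 i)) => //.
      by move=> j _; rewrite oppr_ge0 Dle //; move: (none j) => /= ->.
    by rewrite sumrN sumD oppr0.
  move/eqP: X0; apply; rewrite XE.
  have -> : diag_mx D = 0 by apply/matrixP => i j; rewrite !mxE D0 mul0rn.
  by rewrite mulmx0 mul0mx.
rewrite /= in kpos.
have others : forall i, i != k -> D 0 i <= 0.
  move=> i ne; apply: Dle; apply/negP => ipos.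
  by move/eqP: ne; apply; apply: (card_le1_eqP hle).
have Dk0 : D 0 k != 0 by rewrite gt_eqF.
pose e : 'rV[C]_d := \row_i ((i == k)%:R).
pose f : 'rV[C]_d := \row_i (if i == k then 0 else - D 0 i / D 0 k).
pose sig := P ^t* *m diag_mx e *m P.
pose rho := P ^t* *m diag_mx f *m P.
have XE2 : X = D 0 k *: (sig - rho).
  rewrite XE /sig /rho -conj_lin; congr (_ *m _ *m _).
  apply/matrixP => i j; rewrite !mxE.
  case: (eqVneq i j) => [_|ne]; last by rewrite !mulr0n subrr mulr0.
  rewrite !mulr1n; case: (eqVneq i k) => [->|nik].
    by rewrite mulr1n subr0 mulr1.
  by rewrite mulr0n sub0r mulNr opprK mulrC divfK.
have hsig : pure_state sig.
  split; first split.
  - apply: psd_conj => i; rewrite mxE; exact: ler0n.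
  - rewrite /sig tr_conj // mxtrace_diag (bigD1 k) //= big1 ?mxE ?eqxx ?addr0 //.
    by move=> i /negbTE ni; rewrite mxE ni.
  - rewrite /sig rank_conj //.
    have -> : diag_mx e = delta_mx k k.
      apply/matrixP => i j; rewrite !mxE.
      case: (eqVneq i j) => [<-|ne]; first by rewrite mulr1n andbb.
      rewrite mulr0n; case: (eqVneq i k) => [ik|//].
      by move: ne; rewrite ik eq_sym => /negbTE ->.
    exact: mxrank_delta.
have hrho : state rho.
  split.
  - apply: psd_conj => i; rewrite mxE; case: (eqVneq i k) => // nik.
    rewrite mulNr oppr_ge0 pmulr_lle0 ?invr_gt0 //; exact: others.
  - rewrite /rho tr_conj // mxtrace_diag (bigD1 k) //= mxE eqxx add0r.
    have hs0 := sumD; rewrite (bigD1 k) //= in hs0.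
    move/(canRL (addKr _)): hs0; rewrite addr0 => hs.
    rewrite (eq_bigr (fun i => - D 0 i / D 0 k)); last first.
      by move=> i /negbTE ni; rewrite mxE ni.
    by rewrite -mulr_suml sumrN hs opprK divff.
have hM : MQ Q sig = MQ Q rho.
  move: hMX; rewrite XE2 MQZ MQB => /eqP; rewrite scaler_eq0 (negbTE Dk0) /=.
  by rewrite subr_eq0 => /eqP.
have := hdet sig rho hsig hrho hM => eqrs.
by move/eqP: X0; apply; rewrite XE2 eqrs subrr scaler0.
Qed.
End Helpers.

Unset Implicit Arguments.

Theorem proposition1 (R : realType) (d l m : nat)
  (hd : (1 <= d)%N) (hl : (1 <= l)%N) (hm : (1 <= m)%N)
  (Q : 'I_l -> 'I_m -> 'M[R[i]]_d) (hQ : scheme Q) :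
  determines_pure Q <->
  (forall X : 'M[R[i]]_d, in_ker_MQ Q X -> X != 0 -> at_least_pos_eigs 2 X).
Proof.
split; [exact: dirA | exact: dirB].
Qed.
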